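(* Let $D\ge1$, let $Q_D$ be the $D$-dimensional hypercube on $X=\{0,1\}^D$ with adjacency matrix $A$, and let $E_1V$ be the eigenspace of $A$ in $V=\mathbb{R}^X$ for the eigenvalue $D-2$. Every antisymmetric $A$-like matrix $B$ leaves $E_1V$ invariant, and the restriction map $B\mapsto B|_{E_1V}$, from the space of antisymmetric $A$-like matrices to the space of linear maps $T:E_1V\to E_1V$ satisfying $\langle Tu,w\rangle=-\langle u,Tw\rangle$ for all $u,w\in E_1V$, is injective.
   Context: $Q_D$ is the graph with vertex set $X=\{0,1\}^D$, two vertices adjacent iff they differ in exactly one coordinate. Matrices are real with rows and columns indexed by $X$ and act on $V=\mathbb{R}^X$, with inner product $\langle u,w\rangle=u^tw$. A matrix $B$ is $A$-like if $BA=AB$ and $B_{xy}=0$ for all $x,y\in X$ that are neither equal nor adjacent; it is antisymmetric if $B^t=-B$. *)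

(* Defs.v *)
From HB Require Import structures.
From mathcomp Require Import all_boot all_order all_algebra.
From mathcomp Require Export reals.
Set Implicit Arguments. Unset Strict Implicit. Unset Printing Implicit Defensive.
Import Order.TTheory GRing.Theory Num.Theory.
Local Open Scope ring_scope.

Notation cube D := {ffun 'I_D -> bool}.

(* Matrices with rows/columns indexed by X: square matrices of size |X|,
   where index i : 'I_#|X| stands for the vertex enum_val i. *)
Notation nX D := #|{: cube D}|.

Definition hadj (D : nat) (x y : cube D) : bool := #|[set i | x i != y i]| == 1%N.

Definition adjA (R : nzRingType) (D : nat) : 'M[R]_(nX D) :=
  \matrix_(i, j) (hadj (enum_val i) (enum_val j))%:R.

Definition A_like (R : nzRingType) (D : nat) (B : 'M[R]_(nX D)) : Prop :=
  B *m adjA R D = adjA R D *m B /\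
  forall i j : 'I_(nX D),
    enum_val i != enum_val j -> ~~ hadj (enum_val i) (enum_val j) -> B i j = 0.

Definition antisym (R : nzRingType) (n : nat) (B : 'M[R]_n) : Prop := B^T = - B.

Definition inE1 (R : nzRingType) (D : nat) (v : 'cV[R]_(nX D)) : Prop :=
  adjA R D *m v = (D%:R - 2) *: v.

Definition ip (R : nzRingType) (n : nat) (u w : 'cV[R]_n) : R := (u^T *m w) 0 0.

(* Main.v *)
Require Import Defs.
From mathcomp Require Import all_boot all_order all_algebra reals.
From mathcomp Require Import lra.
Import GRing.Theory Num.Theory.
Local Open Scope ring_scope.

Section S.
Variables (R : realType) (D : nat).

Definition flip (x : cube D) (j : 'I_D) : cube D :=
  [ffun i => if i == j then ~~ x i else x i].

Lemma diff_eq (x a b : cube D) :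
  [set k | x k != a k] = [set k | x k != b k] -> a = b.
Proof.
move=> /setP H; apply/ffunP => k; move: (H k); rewrite !inE.
by case: (x k); case: (a k); case: (b k).
Qed.

Lemma flipE (x y : cube D) j : (y == flip x j) = ([set i | x i != y i] == [set j]).
Proof.
apply/eqP/eqP => [->|H].
  apply/setP => i; rewrite !inE ffunE; by case: (i == j); case: (x i).
apply/ffunP => i; move/setP: H => /(_ i); rewrite !inE ffunE.
by case: (i == j); case: (x i); case: (y i).
Qed.

Lemma hadjE (x y : cube D) :
  (hadj x y)%:R = \sum_(j : 'I_D) ((y == flip x j)%:R : R).
Proof.
under eq_bigr do rewrite flipE.
rewrite /hadj; case: cards1P => [[j0 ->]|H].
  rewrite (bigD1 j0) //= eqxx big1 ?addr0 // => j /negbTE nj.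
  case: eqP => // /setP /(_ j0); rewrite !inE eqxx eq_sym nj //.
rewrite big1 // => j _; case: eqP => // E; exfalso; apply: H; by exists j.
Qed.

Lemma hadj_sym (x y : cube D) : hadj x y = hadj y x.
Proof.
rewrite /hadj; congr (_ == _); apply: eq_card => i; by rewrite !inE eq_sym.
Qed.

Lemma sum_adj (x : cube D) (g : cube D -> R) :
  \sum_(i < nX D) (hadj x (enum_val i))%:R * g (enum_val i) =
  \sum_(j : 'I_D) g (flip x j).
Proof.
rewrite -(big_enum_val (fun y => (hadj x y)%:R * g y)).
under eq_bigr do rewrite hadjE mulr_suml.
rewrite exchange_big /=; apply: eq_bigr => j _.
rewrite (bigD1 (flip x j)) //= eqxx mul1r big1 ?addr0 // => y /negbTE ->.
by rewrite mul0r.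
Qed.

Definition chi (k : 'I_D) : 'cV[R]_(nX D) :=
  \col_i (if (enum_val i : cube D) k then -1 else 1).

Lemma chi_E1 k : inE1 (chi k).
Proof.
apply/matrixP => i j; rewrite !mxE.
under eq_bigr do rewrite !mxE.
rewrite (sum_adj (enum_val i) (fun y => if y k then -1 else 1)).
set c := (if enum_val i k then -1 else 1 : R).
have H : forall j0 : 'I_D, (if flip (enum_val i) j0 k then -1 else 1 : R)
   = c - (j0 == k)%:R * (c *+ 2).
  move=> j0; rewrite /c ffunE eq_sym; case: (j0 == k); case: (enum_val i k);
  rewrite /= ?mul1r ?mul0r ?subr0 ?mulr2n //; lra.
rewrite (eq_bigr _ (fun j0 _ => H j0)).
rewrite big_split /= sumr_const card_ord.
rewrite (bigD1 k) //= eqxx mul1r big1 ?addr0; last first.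
  by move=> j0 /negbTE ->; rewrite mul0r oppr0.
rewrite mulrBl; congr (_ - _); by rewrite mulr_natl.
Qed.


Lemma antisymE {B : 'M[R]_(nX D)} i l : antisym B -> B l i = - B i l.
Proof. by rewrite /antisym => /matrixP /(_ i l); rewrite !mxE. Qed.

Lemma diag0 {B : 'M[R]_(nX D)} i : antisym B -> B i i = 0.
Proof. move=> H; have := antisymE i i H; lra. Qed.

Lemma adj_mul {B : 'M[R]_(nX D)} i l : A_like B -> antisym B ->
  B i l * (hadj (enum_val i) (enum_val l))%:R = B i l.
Proof.
move=> [_ HL] HA; case h: hadj; first by rewrite mulr1.
rewrite mulr0; case: (eqVneq i l) => [<-|nil]; first by rewrite diag0.
rewrite HL ?h //; apply: contra nil => /eqP/enum_val_inj ->; done.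
Qed.

Lemma rowsum0 (B : 'M[R]_(nX D)) i : A_like B -> antisym B -> \sum_l B i l = 0.
Proof.
move=> HL HA.
have h1 : (B *m adjA R D) i i = \sum_l B i l.
  rewrite mxE; apply: eq_bigr => l _; rewrite mxE hadj_sym; exact: adj_mul.
have h2 : (adjA R D *m B) i i = - \sum_l B i l.
  rewrite mxE -sumrN; apply: eq_bigr => l _; rewrite mxE [B l i](antisymE _ _ HA).
  by rewrite mulrN mulrC adj_mul.
have /matrixP/(_ i i) := HL.1; rewrite h1 h2; lra.
Qed.

Lemma kill (B : 'M[R]_(nX D)) : A_like B -> antisym B ->
  (forall k, B *m chi k = 0) -> B = 0.
Proof.
move=> HL HA HB; apply/matrixP => i j; rewrite mxE.
case: (eqVneq i j) => [<-|nij]; first exact: diag0.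
have nxy : enum_val i != enum_val j.
  by apply: contra nij => /eqP/enum_val_inj ->.
case hxy: (hadj (enum_val i) (enum_val j)); last by apply: HL.2; rewrite ?hxy.
move: (hxy); rewrite /hadj => /cards1P [k0 Hk].
have key : \sum_l B i l * ((enum_val i : cube D) k0 != (enum_val l : cube D) k0)%:R = B i j.
  rewrite (bigD1 j) //=.
  have -> : ((enum_val i : cube D) k0 != (enum_val j : cube D) k0) = true.
    by have := set11 k0; rewrite -Hk inE.
  rewrite mulr1 big1 ?addr0 // => l nlj.
  case d: (_ != _); last by rewrite mulr0.
  rewrite mulr1 -(adj_mul _ _ HL HA); case h: hadj; last by rewrite mulr0.
  move: (h); rewrite /hadj => /cards1P [k1 Hk1].
  have k10 : k0 = k1.
    have : k0 \in [set k1] by rewrite -Hk1 inE d.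
    by rewrite inE => /eqP.
  exfalso; move/negP: nlj; apply; apply/eqP/enum_val_inj/(@diff_eq (enum_val i)).
  by rewrite Hk1 Hk k10.
have /matrixP/(_ i 0) := HB k0; rewrite !mxE.
set c := (if (enum_val i : cube D) k0 then -1 else 1 : R).
have E : forall l, B i l * (chi k0) l 0 =
    B i l * c - B i l * ((enum_val i : cube D) k0 != (enum_val l : cube D) k0)%:R * (c *+ 2).
  move=> l; rewrite mxE /c; case: (enum_val i k0); case: (enum_val l k0);
  rewrite /= ?mulr1 ?mulr0 ?mulr2n; lra.
rewrite (eq_bigr _ (fun l _ => E l)) sumrB -mulr_suml -mulr_suml key rowsum0 //.
rewrite mul0r sub0r => /eqP; rewrite oppr_eq0.
have c2 : c *+ 2 != 0 by apply/eqP; rewrite /c mulr2n; case: ifP => _; lra.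
by rewrite mulf_eq0 (negbTE c2) orbF => /eqP.
Qed.
End S.

Theorem lemma9p2 (R : realType) (D : nat) (hD : (1 <= D)%N) :
  (forall B : 'M[R]_(nX D), A_like B -> antisym B ->
     forall v, inE1 v -> inE1 (B *m v)) /\
  (forall B : 'M[R]_(nX D), A_like B -> antisym B ->
     forall u w, inE1 u -> inE1 w -> ip (B *m u) w = - ip u (B *m w)) /\
  (forall B1 B2 : 'M[R]_(nX D), A_like B1 -> antisym B1 -> A_like B2 -> antisym B2 ->
     (forall v, inE1 v -> B1 *m v = B2 *m v) -> B1 = B2).
Proof.
split; [|split].
- move=> B [HC _] _ v Hv; rewrite /inE1 mulmxA -HC -mulmxA Hv.
  by rewrite scalemxAr.
- move=> B _ HA u w _ _; rewrite /ip trmx_mul HA mulmxN mulNmx mxE -mulmxA.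
  done.
- move=> B1 B2 [C1 L1] A1 [C2 L2] A2 H.
  apply/eqP; rewrite -subr_eq0; apply/eqP; apply: kill.
  + split; first by rewrite mulmxBl mulmxBr C1 C2.
    by move=> i j n a; rewrite !mxE L1 ?L2 ?subr0.
  + move: A1 A2; rewrite /antisym => A1 A2; by rewrite linearB /= A1 A2 opprB opprK addrC.
  + move=> k; rewrite mulmxBl H ?subrr //; exact: chi_E1.
Qed.
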